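(* In a $2^K$ factorial experiment with a set of effects of interest $\mathcal F_+\subsetneq\mathcal P_K$, for each $*\in\{N,F,L\}$, $\tilde\tau_{*,u,+}=C_{S,+}\hat Y_{*,r}$ and $\tilde\Omega_{*,u,+}=C_{S,+}\hat\Psi_{*,r}C_{S,+}^T$.
   Context: A $2^K$ factorial experiment: $K$ binary factors, $Q=2^K$ treatment levels $q=(z_1,\dots,z_K)\in\{-1,+1\}^K$ identified with $1,\dots,Q$ in lexicographical order ($-1$ before $+1$). $N$ units with outcomes $Y_i$, covariates $x_i\in\mathbb R^J$ ($\sum_ix_i=0$), factor levels $Z_{ik}\in\{-1,+1\}$, and treatment indicator vector $t_i\in\{0,1\}^Q$. $\mathcal P_K$ is the set of nonempty subsets of $\{1,\dots,K\}$, $Z_{i,\mathcal K}=\prod_{k\in\mathcal K}Z_{ik}$, $c_{\mathcal K}\in\mathbb R^Q$ has entry $2^{-(K-1)}\prod_{k\in\mathcal K}z_k$ at level $(z_1,\dots,z_K)$. Given $\mathcal F_+\subsetneq\mathcal P_K$ with $\mathcal F_-=\mathcal P_K\setminus\mathcal F_+\ne\emptyset$, $C_{S,+}$ (resp. $C_{S,-}$) is the matrix with rows $c_{\mathcal K}^T$, $\mathcal K\in\mathcal F_+$ (resp. $\mathcal F_-$). Factor-unsaturated OLS regressions: (N) $Y_i\sim1+\sum_{\mathcal K\in\mathcal F_+}Z_{i,\mathcal K}$; (F) $Y_i\sim1+\sum_{\mathcal K\in\mathcal F_+}Z_{i,\mathcal K}+x_i$; (L) $Y_i\sim1+\sum_{\mathcal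 K\in\mathcal F_+}Z_{i,\mathcal K}+x_i+\sum_{\mathcal K\in\mathcal F_+}Z_{i,\mathcal K}x_i$. $\tilde\tau_{*,u,+}$ is the vector of 2 times the OLS coefficients of $Z_{i,\mathcal K}$, $\mathcal K\in\mathcal F_+$ (ordered as the rows of $C_{S,+}$), and $\tilde\Omega_{*,u,+}$ its Eicker–Huber–White covariance estimator from the same fit (EHW for coefficients: corresponding block of $(X^TX)^{-1}X^T\mathrm{diag}(\hat\epsilon_i^2)X(X^TX)^{-1}$; scaled by 4). Restricted least squares: $\chi_{L,i}=(t_i^T,(t_i\otimes x_i)^T)^T$, $\chi_L$ the matrix with rows $\chi_{L,i}^T$ (assume $\chi_L^T\chi_L$ nonsingular); $\theta=(\theta_Y^T,\theta_\gamma^T)^T$ with $\theta_Y\in\mathbb R^Q$, $\theta_\gamma=(\theta_{\gamma,1}^T,\dots,\theta_{\gamma,Q}^T)^T$, $\theta_{\gamma,q}\in\mathbb R^J$. For a restriction $R\theta=0$, $\hat\theta_r=\arg\min_\theta\sum_i(Y_i-\chi_{L,i}^T\theta)^2$ s.t. $R\theta=0$; with $M_r=(\chi_L^T\chi_L)^{-1}R^T\{R(\chi_L^T\chi_L)^{-1}R^T\}^{-1}$, RLS residuals $\hat\epsilon_{r,i}$ and $\hat\Sigma_r=(\chi_L^T\chi_L)^{-1}\chi_L^T\mathrm{diag}(\hat\epsilon_{r,i}^2)\chi_L(\chi_L^T\chi_L)^{-1}$, the covariance estimator of the $\theta_Y$-part is the upper-left $Q\times Q$ block of $(I-M_rR)\hat\Sigma_r(I-M_rR)^T$.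 $\hat Y_{*,r}$ and $\hat\Psi_{*,r}$ are the $\theta_Y$-part of $\hat\theta_r$ and this covariance estimator under the restrictions: (N) $C_{S,-}\theta_Y=0$, $\theta_\gamma=0$; (F) $C_{S,-}\theta_Y=0$, $\theta_{\gamma,1}=\cdots=\theta_{\gamma,Q}$; (L) $C_{S,-}\theta_Y=0$, $(C_{S,-}\otimes I_J)\theta_\gamma=0$. *)

(* Defs.v *)
From HB Require Import structures.
From mathcomp Require Import all_boot all_order all_algebra.
Set Implicit Arguments. Unset Strict Implicit. Unset Printing Implicit Defensive.
Import Order.TTheory GRing.Theory Num.Theory.
Local Open Scope ring_scope.

Lemma kdiv_lt m n (a : 'I_(m * n)) : (a %/ n < m)%N.
Proof.
case: n a => [|n] a; first by case: a => a /=; rewrite muln0.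
by rewrite ltn_divLR // ltn_ord.
Qed.
Lemma kmod_lt m n (a : 'I_(m * n)) : (a %% n < n)%N.
Proof.
case: n a => [|n] a; first by case: a => a /=; rewrite muln0.
by rewrite ltn_pmod.
Qed.
Definition kdiv m n (a : 'I_(m * n)) : 'I_m := Ordinal (kdiv_lt a).
Definition kmod m n (a : 'I_(m * n)) : 'I_n := Ordinal (kmod_lt a).

(** Kronecker product A (x) B, with (i,k) <-> i*n2 + k ordering. *)
Definition kron (R : pzRingType) m1 n1 m2 n2 (A : 'M[R]_(m1, n1)) (B : 'M[R]_(m2, n2))
  : 'M[R]_(m1 * m2, n1 * n2) :=
  \matrix_(a, b) (A (kdiv a) (kdiv b) * B (kmod a) (kmod b)).

Section Factorial.
Variable R : realFieldType.
Variable K : nat.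

(** Treatment levels q = 0 .. 2^K - 1 (paper's 1..Q), in lexicographic order
    of (z_1,...,z_K), -1 before +1: z_k(q) = +1 iff bit (K-1-k) of q is set. *)
Definition zlev (q : 'I_(2 ^ K)) (k : 'I_K) : R :=
  if odd (q %/ 2 ^ (K - k.+1)) then 1 else -1.

Definition cvec (S : {set 'I_K}) : 'rV[R]_(2 ^ K) :=
  \row_q ((2%:R / (2 ^ K)%:R) * \prod_(k in S) zlev q k).

Definition Fminus (Fp : {set {set 'I_K}}) : {set {set 'I_K}} :=
  [set S : {set 'I_K} | (S != set0) && (S \notin Fp)].

Definition CS (F : {set {set 'I_K}}) : 'M[R]_(#|F|, 2 ^ K) :=
  \matrix_(i, q) cvec (enum_val i) 0 q.

Variable N J : nat.
(** w i = treatment level of unit i; X = covariates (row i = x_i^T); Y outcomes. *)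
Variable w : 'I_N -> 'I_(2 ^ K).
Variable X : 'M[R]_(N, J).
Variable Y : 'cV[R]_N.
Variable Fp : {set {set 'I_K}}.

Definition Zval (i : 'I_N) (S : {set 'I_K}) : R := \prod_(k in S) zlev (w i) k.
Definition ZF : 'M[R]_(N, #|Fp|) := \matrix_(i, j) Zval i (enum_val j).

(** Design matrices of the factor-unsaturated regressions. *)
Definition design_N : 'M[R]_(N, 1 + #|Fp|) := row_mx (const_mx 1) ZF.
Definition design_F : 'M[R]_(N, 1 + #|Fp| + J) := row_mx design_N X.
(** interactions Z_{i,S} x_{ij}, columns (S,j) in block-major order *)
Definition interact : 'M[R]_(N, #|Fp| * J) :=
  \matrix_(i, a) (ZF i (kdiv a) * X i (kmod a)).
Definition design_L : 'M[R]_(N, 1 + #|Fp| + J + #|Fp| * J) :=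
  row_mx design_F interact.

Definition ols d (D : 'M[R]_(N, d)) : 'cV[R]_d := invmx (D^T *m D) *m D^T *m Y.
Definition ehw d (D : 'M[R]_(N, d)) : 'M[R]_d :=
  let e := Y - D *m ols D in
  invmx (D^T *m D) *m D^T *m diag_mx (\row_i (e i 0 ^+ 2)) *m D
    *m invmx (D^T *m D).

(** selection of the coefficients of Z_{i,S}, S in F_+ (columns 2..1+|F_+|) *)
Definition selZ d : 'M[R]_(#|Fp|, d) :=
  \matrix_(j, c) ((nat_of_ord c == j.+1)%N)%:R.

Definition tau_u d (D : 'M[R]_(N, d)) : 'cV[R]_#|Fp| := 2%:R *: (selZ d *m ols D).
Definition Omega_u d (D : 'M[R]_(N, d)) : 'M[R]_#|Fp| :=
  4%:R *: (selZ d *m ehw D *m (selZ d)^T).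

(** chi_L : rows (t_i^T, (t_i (x) x_i)^T) *)
Definition tvec (i : 'I_N) : 'rV[R]_(2 ^ K) := \row_q ((w i == q)%:R).
Definition chiL : 'M[R]_(N, 2 ^ K + 2 ^ K * J) :=
  \matrix_(i, c) row_mx (tvec i)
     (\row_a (tvec i 0 (kdiv a) * X i (kmod a))) 0 c.

Definition SSR (th : 'cV[R]_(2 ^ K + 2 ^ K * J)) : R :=
  \sum_i ((Y - chiL *m th) i 0) ^+ 2.

Definition is_rls r (Rm : 'M[R]_(r, 2 ^ K + 2 ^ K * J))
  (th : 'cV[R]_(2 ^ K + 2 ^ K * J)) : Prop :=
  Rm *m th = 0 /\
  forall th', Rm *m th' = 0 -> SSR th <= SSR th'.

Definition Psi_r r (Rm : 'M[R]_(r, 2 ^ K + 2 ^ K * J))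
  (th : 'cV[R]_(2 ^ K + 2 ^ K * J)) : 'M[R]_(2 ^ K) :=
  let B := invmx (chiL^T *m chiL) in
  let Mr := B *m Rm^T *m invmx (Rm *m B *m Rm^T) in
  let e := Y - chiL *m th in
  let Sig := B *m chiL^T *m diag_mx (\row_i (e i 0 ^+ 2)) *m chiL *m B in
  let P := 1%:M - Mr *m Rm in
  ulsubmx (P *m Sig *m P^T : 'M_(2 ^ K + 2 ^ K * J)).

(* (N): C_{S,-} theta_Y = 0 and theta_gamma = 0 *)
Definition R_N : 'M[R]_(#|Fminus Fp| + 2 ^ K * J, 2 ^ K + 2 ^ K * J) :=
  block_mx (CS (Fminus Fp)) 0 0 1%:M.
(* (F): C_{S,-} theta_Y = 0 and theta_{gamma,q} - theta_{gamma,q+1} = 0 *)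
Definition diffmx : 'M[R]_((2 ^ K).-1, 2 ^ K) :=
  \matrix_(r, q) (((nat_of_ord q == r)%N)%:R - ((nat_of_ord q == r.+1)%N)%:R).
Definition R_F : 'M[R]_(#|Fminus Fp| + (2 ^ K).-1 * J, 2 ^ K + 2 ^ K * J) :=
  block_mx (CS (Fminus Fp)) 0 0 (kron diffmx (1%:M : 'M_J)).
(* (L): C_{S,-} theta_Y = 0 and (C_{S,-} (x) I_J) theta_gamma = 0 *)
Definition R_L : 'M[R]_(#|Fminus Fp| + #|Fminus Fp| * J, 2 ^ K + 2 ^ K * J) :=
  block_mx (CS (Fminus Fp)) 0 0 (kron (CS (Fminus Fp)) (1%:M : 'M_J)).

Definition equivalence d (D : 'M[R]_(N, d)) r (Rm : 'M[R]_(r, 2 ^ K + 2 ^ K * J)) : Prop :=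
  forall th, is_rls Rm th ->
    tau_u D = CS Fp *m usubmx th /\
    Omega_u D = CS Fp *m Psi_r Rm th *m (CS Fp)^T.

End Factorial.

(* Main.v *)
Require Import Defs.
From HB Require Import structures.
From mathcomp Require Import all_boot all_order all_algebra.
From mathcomp Require Import zify ring lra.
Import Order.TTheory GRing.Theory Num.Theory.
Set Implicit Arguments. Unset Strict Implicit.

Module MH.

Lemma bit_add_same (q e : nat) : ~~ odd (q %/ 2^e) -> odd ((q + 2^e) %/ 2^e).
Proof.
move=> h; rewrite divnDr ?dvdnn // divnn expn_gt0 /= addn1 /=; exact: h.
Qed.

Lemma bit_add_other (q e e' : nat) : ~~ odd (q %/ 2^e) -> e' != e ->
  odd ((q + 2^e) %/ 2^e') = odd (q %/ 2^e').
Proof.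
move=> h ne.
case: (ltngtP e' e) => [lt| gt|eq]; last by rewrite eq eqxx in ne.
- have -> : 2^e = 2^(e - e') * 2^e' by rewrite -expnD subnK // ltnW.
  rewrite addnC divnMDl ?expn_gt0 // oddD oddX.
  by have -> : (e - e' == 0)%N = false by apply/negbTE; rewrite subn_eq0 -ltnNge.
- have -> : 2^e' = 2^e * 2^(e' - e) by rewrite -expnD subnKC // ltnW.
  rewrite !divnMA divnDr ?dvdnn // divnn expn_gt0 /=.
  move: h; set t := q %/ 2^e => h.
  have [s ->] : exists s, t = (s * 2)%N by exists t./2; rewrite -[t in LHS]odd_double_half (negbTE h) add0n muln2.
  have -> : (e' - e = (e' - e).-1.+1)%N by rewrite prednK // subn_gt0.
  rewrite expnS mulnC !divnMA [(2 * s)%N]mulnC divnMDl // mulnK // (divn_small (isT : 1 < 2)) addn0 //.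
Qed.

Lemma add_bound (q e K : nat) : q < 2^K -> e < K -> ~~ odd (q %/ 2^e) -> q + 2^e < 2^K.
Proof.
move=> hq he hb.
set t := q %/ 2^e.
have ht : t < 2^(K-e) by rewrite ltn_divLR ?expn_gt0 // -expnD subnK // ltnW.
have ev : ~~ odd (2^(K-e)) by rewrite oddX orbF subn_eq0 -ltnNge.
have ht2 : t.+2 <= 2^(K-e).
  rewrite ltn_neqAle ht andbT; apply/eqP => E.
  by move: ev; rewrite -E /= hb.
have h1 : q < t.+1 * 2^e by apply: ltn_ceil; rewrite expn_gt0.
have h2 : t.+2 * 2^e <= 2^(K-e) * 2^e by rewrite leq_mul2r ht2 orbT.
have h3 : 2^(K-e) * 2^e = 2^K by rewrite -expnD subnK // ltnW.
move: h1 h2 h3; set P := 2^e; set M := 2^(K-e); set Q := 2^K. nia.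
Qed.

Lemma sub_bit (q e : nat) : odd (q %/ 2^e) -> 2^e <= q /\ ~~ odd ((q - 2^e) %/ 2^e).
Proof.
move=> h.
have hle : 2^e <= q.
  case: (leqP (2^e) q) => // lt; by rewrite divn_small in h.
split => //.
have E : (q %/ 2^e) = ((q - 2^e) %/ 2^e).+1.
  by rewrite -{1}(subnK hle) divnDr ?dvdnn // divnn expn_gt0 addn1.
by move: h; rewrite E.
Qed.

Definition flipn (e q : nat) := if odd (q %/ 2^e) then q - 2^e else q + 2^e.

Lemma flipn_lt K e q : q < 2^K -> e < K -> flipn e q < 2^K.
Proof.
rewrite /flipn => hq he; case: ifP => hb.
  exact: leq_ltn_trans (leq_subr _ _) hq.
by apply: add_bound => //; rewrite hb.
Qed.

Lemma flipn_same e q : odd (flipn e q %/ 2^e) = ~~ odd (q %/ 2^e).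
Proof.
rewrite /flipn; case: ifP => hb /=.
  by have [_ /negbTE] := sub_bit hb.
by apply: bit_add_same; rewrite hb.
Qed.

Lemma flipn_other e e' q : e' != e -> odd (flipn e q %/ 2^e') = odd (q %/ 2^e').
Proof.
move=> ne; rewrite /flipn; case: ifP => hb.
  have [hle hb'] := sub_bit hb.
  by have := bit_add_other hb' ne; rewrite subnK // => ->.
by apply: bit_add_other => //; rewrite hb.
Qed.

Lemma flipnK e q : flipn e (flipn e q) = q.
Proof.
rewrite {2}/flipn; case: ifP => hb.
  have [hle hb'] := sub_bit hb.
  by rewrite /flipn (negbTE hb') subnK.
by rewrite /flipn bit_add_same ?hb // addnK.
Qed.

Local Open Scope ring_scope.

Section Had.
Variables (R : realFieldType) (K : nat).

Definition zp (q : 'I_(2^K)) (S : {set 'I_K}) : R := \prod_(k in S) zlev R q k.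

Definition flipo e (he : (e < K)%N) (q : 'I_(2^K)) : 'I_(2^K) := Ordinal (flipn_lt (ltn_ord q) he).

Lemma flipoK e (he : (e < K)%N) : involutive (flipo he).
Proof. by move=> q; apply: val_inj; rewrite /= flipnK. Qed.

Lemma zsum0 (U : {set 'I_K}) : U != set0 -> \sum_(q : 'I_(2^K)) zp q U = 0.
Proof.
case/set0Pn => k0 hk0.
have he : (K - k0.+1 < K)%N by have := ltn_ord k0; lia.
have hf : forall q, zp (flipo he q) U = - zp q U.
  move=> q; rewrite /zp (bigD1 k0) //= [in RHS](bigD1 k0) //= -mulNr; congr (_ * _).
    by rewrite /zlev /= flipn_same; case: odd => /=; rewrite ?opprK.
  apply: eq_bigr => k /andP [_ hk]; rewrite /zlev /= flipn_other //.
  apply/eqP => E; move/eqP: hk; apply; apply: val_inj => /=.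
  have := ltn_ord k; have := ltn_ord k0; lia.
have h : \sum_(q : 'I_(2^K)) zp q U = \sum_(q : 'I_(2^K)) zp (flipo he q) U.
  exact: (reindex_inj (can_inj (flipoK he))).
move: h; under [X in _ = X -> _]eq_bigr => q _ do rewrite hf.
rewrite sumrN => h; lra.
Qed.

Lemma zlev_sq (q : 'I_(2^K)) k : zlev R q k * zlev R q k = 1.
Proof. by rewrite /zlev; case: odd; rewrite ?mulr1 ?mulrNN ?mulr1. Qed.

Lemma zp_mul q S T : zp q S * zp q T = zp q ((S :\: T) :|: (T :\: S)).
Proof.
rewrite /zp (big_mkcond (fun k => k \in S)) (big_mkcond (fun k => k \in T)).
rewrite (big_mkcond (fun k => k \in _)) -big_split /=; apply: eq_bigr => k _.
rewrite !inE; case: (k \in S); case: (k \in T) => /=; by rewrite ?mulr1 ?mul1r ?zlev_sq.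
Qed.

Lemma zp0 q : zp q set0 = 1.
Proof. by rewrite /zp big_set0. Qed.

Lemma zorth S T : \sum_(q : 'I_(2^K)) zp q S * zp q T = if S == T then (2^K)%:R else 0.
Proof.
case: eqP => [<-|ne].
  under eq_bigr => q _ do rewrite zp_mul setDv setU0 zp0.
  by rewrite sumr_const card_ord.
under eq_bigr => q _ do rewrite zp_mul.
apply: zsum0; apply/negP => /eqP h; apply: ne; apply/setP => k.
move/setP: h => /(_ k); rewrite !inE /=.
by case: (k \in S); case: (k \in T).
Qed.

End Had.

End MH.
Import MH.

Module MK.

Lemma kpair_lt m n (i : 'I_m) (j : 'I_n) : i * n + j < m * n.
Proof. have := ltn_ord i; have := ltn_ord j; nia. Qed.

Definition kpair m n (p : 'I_m * 'I_n) : 'I_(m * n) := Ordinal (kpair_lt p.1 p.2).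

Lemma kdiv_pair m n (p : 'I_m * 'I_n) : kdiv (kpair p) = p.1.
Proof.
apply: val_inj => /=; have hn : 0 < n by have := ltn_ord p.2; lia.
by rewrite divnMDl // divn_small ?addn0.
Qed.

Lemma kmod_pair m n (p : 'I_m * 'I_n) : kmod (kpair p) = p.2.
Proof. apply: val_inj => /=; by rewrite modnMDl modn_small. Qed.

Lemma kpairK m n (x : 'I_(m * n)) : kpair (kdiv x, kmod x) = x.
Proof. by apply: val_inj => /=; rewrite -divn_eq. Qed.

Lemma kdivmod_inj m n (x y : 'I_(m * n)) : kdiv x = kdiv y -> kmod x = kmod y -> x = y.
Proof. by move=> h1 h2; rewrite -(kpairK x) -(kpairK y) h1 h2. Qed.

Local Open Scope ring_scope.

Lemma sum_kron (V : nmodType) m n (F : 'I_m -> 'I_n -> V) :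
  \sum_(x : 'I_(m * n)) F (kdiv x) (kmod x) = \sum_(i < m) \sum_(j < n) F i j.
Proof.
rewrite pair_big /=.
rewrite (reindex (@kpair m n)) /=.
  by apply: eq_bigr => p _; rewrite kdiv_pair kmod_pair.
exists (fun x => (kdiv x, kmod x)) => [p _|x _].
  by rewrite kdiv_pair kmod_pair; case: p.
exact: kpairK.
Qed.

End MK.
Import MK.

Module MA2.
Local Open Scope ring_scope.

Section Abs.
Variable R : realFieldType.

Lemma sumsqE k (x : 'cV[R]_k) : (x^T *m x) 0 0 = \sum_j x j 0 ^+ 2.
Proof. rewrite mxE; apply: eq_bigr => j _; by rewrite mxE expr2. Qed.

Lemma sumsq_ge0 k (x : 'cV[R]_k) : 0 <= (x^T *m x) 0 0.
Proof. rewrite sumsqE; apply: sumr_ge0 => j _; exact: sqr_ge0. Qed.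

Lemma sumsq0' k (x : 'cV[R]_k) : (x^T *m x) 0 0 = 0 -> x = 0.
Proof.
rewrite sumsqE => H2.
apply/matrixP => i j; rewrite (ord1 j) mxE.
have /psumr_eq0P := H2.
move=> /(_ (fun j _ => sqr_ge0 (x j 0)) i isT) /eqP; by rewrite sqrf_eq0 => /eqP.
Qed.

Lemma sumsq0 k (x : 'cV[R]_k) : x^T *m x = 0 -> x = 0.
Proof. by move=> H; apply: sumsq0'; rewrite H mxE. Qed.

Lemma unit_of_inj k (M : 'M[R]_k) : (forall u : 'rV_k, u *m M = 0 -> u = 0) -> M \in unitmx.
Proof.
move=> H; rewrite -row_free_unit -kermx_eq0; apply/eqP/row_matrixP => i.
by rewrite row0; apply: H; rewrite -row_mul mulmx_ker row0.
Qed.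

Definition SSRg n p (chi : 'M[R]_(n,p)) (Y : 'cV_n) th := \sum_i ((Y - chi *m th) i 0) ^+ 2.
Definition Pfull n p r (chi : 'M[R]_(n,p)) (Y : 'cV_n) (Rm : 'M_(r,p)) (th : 'cV_p) : 'M_p :=
  let B := invmx (chi^T *m chi) in
  let Mr := B *m Rm^T *m invmx (Rm *m B *m Rm^T) in
  let e := Y - chi *m th in
  let Sig := B *m chi^T *m diag_mx (\row_i (e i 0 ^+ 2)) *m chi *m B in
  let P := 1%:M - Mr *m Rm in
  P *m Sig *m P^T.

Lemma SSRgE n p (chi : 'M[R]_(n,p)) Y th :
  SSRg chi Y th = ((Y - chi *m th)^T *m (Y - chi *m th)) 0 0.
Proof. by rewrite sumsqE. Qed.

Variables (n p r m : nat) (chi : 'M[R]_(n,p)) (Y : 'cV[R]_n) (Rm : 'M[R]_(r,p))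
  (A : 'M[R]_(p,m)) (S : 'M[R]_(p,r)) (L : 'M[R]_(m,p)).
Hypotheses (HG : chi^T *m chi \in unitmx) (HRA : Rm *m A = 0) (HRS : Rm *m S = 1%:M)
  (HLA : L *m A = 1%:M) (Hdim : (r + m = p)%N).

Let G := chi^T *m chi.
Let B := invmx G.

Lemma Gsym : G^T = G.
Proof. by rewrite /G trmx_mul trmxK. Qed.
Lemma Bsym : B^T = B.
Proof. by rewrite /B trmx_inv Gsym. Qed.
Lemma BG : B *m G = 1%:M. Proof. exact: mulVmx. Qed.
Lemma GB : G *m B = 1%:M. Proof. exact: mulmxV. Qed.

Lemma posdef (y : 'cV_p) : y^T *m G *m y = 0 -> chi *m y = 0.
Proof.
move=> H; apply: sumsq0; by rewrite trmx_mul !mulmxA -H /G !mulmxA.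
Qed.

Lemma ker0 (y : 'cV_p) : chi *m y = 0 -> y = 0.
Proof.
move=> H; have : G *m y = 0 by rewrite /G -mulmxA H mulmx0.
by move=> H2; rewrite -[y]mul1mx -BG -mulmxA H2 mulmx0.
Qed.

Lemma AGA_unit : A^T *m G *m A \in unitmx.
Proof.
apply: unit_of_inj => u Hu.
have h1 : chi *m (A *m u^T) = 0.
  apply: posdef; rewrite trmx_mul trmxK !mulmxA.
  have Hu2 : u *m A^T *m chi^T *m chi *m A = 0 by rewrite -Hu /G !mulmxA.
  by rewrite Hu2 mul0mx.
have h2 := ker0 h1.
have h3 : u^T = 0 by rewrite -[u^T]mul1mx -HLA -mulmxA h2 mulmx0.
by rewrite -[u]trmxK h3 trmx0.
Qed.

Lemma XBG k (X : 'M_(k,p)) : X *m B *m chi^T *m chi = X.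
Proof. by rewrite -!mulmxA -/G BG mulmx1. Qed.

Let W := Rm *m B *m Rm^T.

Lemma W_unit : W \in unitmx.
Proof.
apply: unit_of_inj => u Hu.
have h1 : chi *m (B *m Rm^T *m u^T) = 0.
  apply: posdef.
  rewrite !trmx_mul trmxK Bsym !mulmxA XBG.
  have Hu2 : u *m Rm *m B *m Rm^T = 0 by rewrite -Hu /W !mulmxA.
  by rewrite trmxK Hu2 mul0mx.
have h2 := ker0 h1.
have h3 : Rm^T *m u^T = 0.
  by rewrite -[Rm^T *m u^T]mul1mx -GB -(mulmxA G B) (mulmxA B) h2 mulmx0.
have h4 : u^T = 0.
  by rewrite -[u^T]mul1mx -trmx1 -HRS trmx_mul -mulmxA h3 mulmx0.
by rewrite -[u]trmxK h4 trmx0.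
Qed.

Lemma nullsp k (V : 'M_(p,k)) : Rm *m V = 0 -> exists Z : 'M_(m,k), V = A *m Z.
Proof.
move=> HV.
have rkA : \rank A^T = m.
  rewrite mxrank_tr; apply/eqP; rewrite eqn_leq rank_leq_col /=.
  by rewrite -{1}(mxrank1 R m) -HLA mxrankM_maxr.
have rkR : \rank Rm = r.
  apply/eqP; rewrite eqn_leq rank_leq_row /=.
  by rewrite -{1}(mxrank1 R r) -HRS mxrankM_maxl.
have rkK : \rank (kermx Rm^T) = m.
  by rewrite mxrank_ker mxrank_tr rkR -Hdim addKn.
have hsub : (A^T <= kermx Rm^T)%MS by rewrite sub_kermx -trmx_mul HRA trmx0.
have [_] := mxrank_leqif_sup hsub.
rewrite rkA rkK eqxx => /esym hK.
have hV : (V^T <= kermx Rm^T)%MS by rewrite sub_kermx -trmx_mul HV trmx0.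
have /submxP [D hD] := submx_trans hV hK.
exists D^T; by rewrite -[V]trmxK hD trmx_mul trmxK.
Qed.



Lemma DTD_unit : (chi *m A)^T *m (chi *m A) \in unitmx.
Proof. have := AGA_unit; by rewrite /G trmx_mul !mulmxA. Qed.

Lemma normal_eq_gen d (D : 'M[R]_(n,d)) : D^T *m D \in unitmx -> D^T *m (Y - D *m ols Y D) = 0.
Proof.
move=> HD; rewrite /ols mulmxBr !mulmxA (mulmxV HD) mul1mx; exact: subrr.
Qed.

Lemma normal_eq : (chi *m A)^T *m (Y - chi *m A *m ols Y (chi *m A)) = 0.
Proof. exact: normal_eq_gen DTD_unit. Qed.

Lemma Afree (z : 'cV_m) : A *m z = 0 -> z = 0.
Proof. by move=> H; rewrite -[z]mul1mx -HLA -mulmxA H mulmx0. Qed.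

Lemma rls_sol th : Rm *m th = 0 ->
  (forall th', Rm *m th' = 0 -> SSRg chi Y th <= SSRg chi Y th') ->
  th = A *m ols Y (chi *m A).
Proof.
move=> Hth Hmin.
have [Z hZ] := nullsp Hth.
set b0 := ols Y (chi *m A).
have := Hmin (A *m b0); rewrite mulmxA HRA mul0mx => /(_ erefl).
rewrite !SSRgE hZ.
set e := Y - chi *m A *m b0.
set d := chi *m A *m (b0 - Z).
have hY : Y - chi *m (A *m Z) = e + d.
  by rewrite /e /d mulmxBr addrA subrK mulmxA.
have he : Y - chi *m (A *m b0) = e by rewrite /e mulmxA.
have hed : e^T *m d = 0.
  by rewrite /d mulmxA -(trmxK (chi *m A)) -trmx_mul normal_eq trmx0 mul0mx.
have hde : d^T *m e = 0 by rewrite -(trmxK e) -trmx_mul hed trmx0.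
rewrite hY he [(e + d)^T]linearD /= !mulmxDl (mulmxDr e^T e d) (mulmxDr d^T e d) hed hde addr0 add0r.
rewrite mxE gerDl => hle.
have hd0 : (d^T *m d) 0 0 = 0 by apply/eqP; rewrite eq_le hle sumsq_ge0.
have := sumsq0' hd0; rewrite /d -mulmxA => /ker0 /Afree /eqP.
by rewrite subr_eq0 => /eqP <-.
Qed.


Let H := invmx (A^T *m G *m A).
Let Mr := B *m Rm^T *m invmx W.
Let P := 1%:M - Mr *m Rm.

Lemma Wsym : W^T = W.
Proof. by rewrite /W !trmx_mul trmxK Bsym mulmxA. Qed.

Lemma Hsym : H^T = H.
Proof. by rewrite /H trmx_inv !trmx_mul !trmxK !mulmxA. Qed.

Lemma RP : Rm *m P = 0.
Proof.
rewrite /P mulmxBr mulmx1 /Mr !mulmxA -/W (mulmxV W_unit) mul1mx; exact: subrr.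
Qed.

Lemma PBsym : (P *m B)^T = P *m B.
Proof.
rewrite trmx_mul Bsym /P linearB /= trmx1 mulmxBr mulmx1 mulmxBl mul1mx.
congr (_ - _).
by rewrite !trmx_mul trmx_inv Wsym trmxK Bsym /Mr !mulmxA.
Qed.

Lemma PB_eq : P *m B = A *m H *m A^T.
Proof.
apply/eqP; rewrite -subr_eq0; apply/eqP.
set Q := P *m B - A *m H *m A^T.
have RQ : Rm *m Q = 0.
  by rewrite /Q mulmxBr mulmxA RP mul0mx !mulmxA HRA !mul0mx subrr.
have [Z hZ] := nullsp RQ.
have QGA : Q *m G *m A = 0.
  have f1 : P *m B *m G = P by rewrite -mulmxA BG mulmx1.
  have f2 : A *m H *m A^T *m G *m A = A.
    by rewrite -[RHS]mulmx1 -(mulVmx AGA_unit) -/H !mulmxA.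
  have f3 : P *m A = A by rewrite /P mulmxBl mul1mx -mulmxA HRA mulmx0 subr0.
  by rewrite /Q (mulmxBl (P *m B)) (mulmxBl (P *m B *m G)) f1 f2 f3 subrr.
have Qsym : Q^T = Q.
  by rewrite /Q linearB /= PBsym !trmx_mul trmxK Hsym mulmxA.
have hZ0 : Z^T = 0.
  have : Z^T *m (A^T *m G *m A) = 0.
    have -> : Z^T *m (A^T *m G *m A) = Q^T *m G *m A by rewrite hZ trmx_mul !mulmxA.
    by rewrite Qsym QGA.
  by move=> h; rewrite -[Z^T]mulmx1 -(mulmxV AGA_unit) mulmxA h mul0mx.
by rewrite hZ -[Z]trmxK hZ0 trmx0 mulmx0.
Qed.

Lemma Pfull_eq th : Rm *m th = 0 ->
  (forall th', Rm *m th' = 0 -> SSRg chi Y th <= SSRg chi Y th') ->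
  Pfull chi Y Rm th = A *m ehw Y (chi *m A) *m A^T.
Proof.
move=> Hth Hmin.
have hth := rls_sol Hth Hmin.
rewrite /Pfull /ehw /= hth mulmxA.
set E := diag_mx _.
have hDD : (chi *m A)^T *m (chi *m A) = A^T *m G *m A by rewrite trmx_mul !mulmxA.
rewrite hDD -/H -/B -/W -/Mr -/P.
have hBP : B *m P^T = A *m H *m A^T by rewrite -Bsym -trmx_mul PB_eq !trmx_mul trmxK Hsym mulmxA.
have -> : P *m (B *m chi^T *m E *m chi *m B) *m P^T = (P *m B) *m (chi^T *m E *m chi) *m (B *m P^T).
  by rewrite !mulmxA.
rewrite hBP PB_eq trmx_mul.
by rewrite !mulmxA.
Qed.

End Abs.

End MA2.
Import MA2.

Module MC.
Local Open Scope ring_scope.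

Lemma usubmx_row (R : pzRingType) m1 m2 n1 n2 (U : 'M[R]_(m1 + m2, n1)) (V : 'M[R]_(m1 + m2, n2)) :
  usubmx (row_mx U V) = row_mx (usubmx U) (usubmx V).
Proof. by rewrite -{1}[U]vsubmxK -{1}[V]vsubmxK -block_mxEh block_mxEv col_mxKu. Qed.

Lemma sum_eq1 (R : pzRingType) n (j : 'I_n) (f : 'I_n -> R) : \sum_i (i == j)%:R * f i = f j.
Proof.
rewrite (bigD1 j) //= eqxx mul1r big1 ?addr0 // => i /negbTE ->; by rewrite mul0r.
Qed.

Lemma kron_mul (R : comPzRingType) m1 n1 m2 n2 p1 p2 (A : 'M[R]_(m1,n1)) (B : 'M[R]_(m2,n2))
  (C : 'M[R]_(n1,p1)) (D : 'M[R]_(n2,p2)) :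
  kron A B *m kron C D = kron (A *m C) (B *m D).
Proof.
apply/matrixP => x y; rewrite !mxE.
under eq_bigr => a _ do rewrite !mxE.
rewrite (sum_kron (fun i j => A (kdiv x) i * B (kmod x) j * (C i (kdiv y) * D j (kmod y)))).
rewrite big_distrlr /=; apply: eq_bigr => i _; apply: eq_bigr => j _; ring.
Qed.

Lemma kron11 (R : pzRingType) m n : kron (1%:M : 'M[R]_m) (1%:M : 'M[R]_n) = 1%:M.
Proof.
apply/matrixP => x y; rewrite !mxE.
case: (eqVneq x y) => [->|ne]; first by rewrite !eqxx mulr1.
case: (eqVneq (kdiv x) (kdiv y)) => h1; last by rewrite mul0r.
case: (eqVneq (kmod x) (kmod y)) => h2; last by rewrite mulr0.
by rewrite (kdivmod_inj h1 h2) eqxx in ne.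
Qed.

Lemma kronZl (R : comPzRingType) m1 n1 m2 n2 (a : R) (A : 'M[R]_(m1,n1)) (B : 'M[R]_(m2,n2)) :
  kron (a *: A) B = a *: kron A B.
Proof. apply/matrixP => x y; rewrite !mxE; ring. Qed.

Lemma kron0l (R : comPzRingType) m1 n1 m2 n2 (B : 'M[R]_(m2,n2)) :
  kron (0 : 'M[R]_(m1,n1)) B = 0.
Proof. apply/matrixP => x y; rewrite !mxE; ring. Qed.

Section Conc.
Variables (R : realFieldType) (K : nat).
Local Notation Q := (2 ^ K)%N.

Definition ZQ (F : {set {set 'I_K}}) : 'M[R]_(Q, #|F|) := \matrix_(q, s) zp R q (enum_val s).

Lemma QR0 : (Q%:R : R) != 0.
Proof. by rewrite pnatr_eq0 expn_eq0. Qed.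

Lemma CStr (F : {set {set 'I_K}}) : (CS R F)^T = (2%:R / Q%:R) *: ZQ F.
Proof. by apply/matrixP => q i; rewrite !mxE. Qed.

Lemma CS_ZQ (F1 F2 : {set {set 'I_K}}) : CS R F1 *m ZQ F2 =
  \matrix_(i, s) (if enum_val i == enum_val s then 2%:R else 0).
Proof.
apply/matrixP => i s; rewrite [LHS]mxE [RHS]mxE.
transitivity (2%:R / Q%:R * \sum_(q : 'I_Q) zp R q (enum_val i) * zp R q (enum_val s)).
  rewrite mulr_sumr; apply: eq_bigr => q _; rewrite !mxE /zp; ring.
rewrite zorth; case: eqP => _; last by rewrite mulr0.
by rewrite mulrAC -mulrA divff ?QR0 // mulr1.
Qed.

Lemma CS_ZQ_same (F : {set {set 'I_K}}) : CS R F *m ZQ F = 2%:R%:M.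
Proof.
rewrite CS_ZQ; apply/matrixP => i s; rewrite !mxE (inj_eq enum_val_inj).
by case: eqP.
Qed.

Lemma CS_ZQ_disj (F1 F2 : {set {set 'I_K}}) : [disjoint F1 & F2] -> CS R F1 *m ZQ F2 = 0.
Proof.
move=> hd; rewrite CS_ZQ; apply/matrixP => i s; rewrite !mxE.
case: eqP => // E; have h1 := enum_valP i; have h2 := enum_valP s.
by move: h2; rewrite -E (disjointFr hd h1).
Qed.

Lemma CS_CStr (F : {set {set 'I_K}}) : CS R F *m (CS R F)^T = (4%:R / Q%:R) *: 1%:M.
Proof.
rewrite CStr -scalemxAr CS_ZQ_same; apply/matrixP => i j; rewrite !mxE.
case: (i == j) => /=; last by rewrite !mulr0.
rewrite !mulr1; field; exact: QR0.
Qed.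

Lemma sumzp0 (F : {set {set 'I_K}}) (s : 'I_#|F|) : set0 \notin F -> \sum_(q : 'I_Q) zp R q (enum_val s) = 0.
Proof.
move=> h0; apply: zsum0; apply/negP => /eqP E.
by move: (enum_valP s); rewrite E (negbTE h0).
Qed.

Lemma CS_one (F : {set {set 'I_K}}) : set0 \notin F -> CS R F *m (const_mx 1 : 'M_(Q, 1)) = 0.
Proof.
move=> h0; apply/matrixP => i j; rewrite !mxE.
under eq_bigr => q _ do rewrite !mxE mulr1.
by rewrite -mulr_sumr sumzp0 // mulr0.
Qed.

Lemma one_ZQ (F : {set {set 'I_K}}) : set0 \notin F -> (const_mx 1 : 'M_(1, Q)) *m ZQ F = 0.
Proof.
move=> h0; apply/matrixP => i j; rewrite !mxE.
under eq_bigr => q _ do rewrite !mxE mul1r.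
by rewrite sumzp0.
Qed.

Lemma one_one : (const_mx 1 : 'M[R]_(1, Q)) *m (const_mx 1 : 'M_(Q, 1)) = (Q%:R)%:M.
Proof.
apply/matrixP => i j; rewrite !mxE (ord1 i) (ord1 j) /=.
under eq_bigr => q _ do rewrite !mxE mulr1.
by rewrite sumr_const card_ord.
Qed.

End Conc.

Lemma sum_eqn (R : pzRingType) n (i0 : nat) (g : nat -> R) : (i0 < n)%N ->
  \sum_(q < n) ((q : nat) == i0)%:R * g q = g i0.
Proof.
move=> h; rewrite (bigD1 (Ordinal h)) //= eqxx mul1r big1 ?addr0 // => q hq.
have -> : ((q : nat) == i0) = false.
  by apply/negbTE; apply: contra hq => /eqP E; apply/eqP; apply: val_inj.
by rewrite mul0r.
Qed.

Section Conc2.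
Variables (R : realFieldType) (K N J : nat) (w : 'I_N -> 'I_(2 ^ K)) (X : 'M[R]_(N, J))
  (Fp : {set {set 'I_K}}).
Local Notation Q := (2 ^ K)%N.

Definition diffS : 'M[R]_(Q, Q.-1) := \matrix_(q, r) ((q <= r)%N)%:R.

Lemma diff_S : Defs.diffmx R K *m diffS = 1%:M.
Proof.
apply/matrixP => r r'; rewrite !mxE.
under eq_bigr => q _ do rewrite !mxE mulrBl.
rewrite sumrB (sum_eqn (fun q => ((q <= r')%N)%:R : R)); last by have := ltn_ord r; lia.
rewrite (sum_eqn (fun q => ((q <= r')%N)%:R : R)); last by have := ltn_ord r; lia.
case: (ltngtP r r') => h.
- by rewrite subrr -val_eqE /= ltn_eqF.
- by rewrite subrr -val_eqE /= gtn_eqF.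
- have -> : r = r' by apply: val_inj.
  by rewrite eqxx subr0.
Qed.

Lemma diff_one : Defs.diffmx R K *m (const_mx 1 : 'M_(Q,1)) = 0.
Proof.
apply/matrixP => r j; rewrite !mxE.
rewrite (eq_bigr (fun q : 'I_Q => ((q:nat) == r)%:R * 1 - ((q:nat) == r.+1)%:R * 1)); last first.
  by move=> q _; rewrite !mxE !mulr1.
have h := ltn_ord r.
rewrite sumrB (sum_eqn (fun _ => 1 : R)); last by lia.
by rewrite (sum_eqn (fun _ => 1 : R)) ?subrr //; lia.
Qed.

Definition EE : 'M[R]_(Q * J, J) := \matrix_(a, j) (kmod a == j)%:R.
Definition FZ : 'M[R]_(Q * J, #|Fp| * J) :=
  \matrix_(a, b) (zp R (kdiv a) (enum_val (kdiv b)) * (kmod a == kmod b)%:R).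
Definition Ep : 'M[R]_(J, Q * J) := \matrix_(j, a) ((Q%:R)^-1 * (kmod a == j)%:R).

Lemma sum_j (f : 'I_J -> R) (x2 b2 : 'I_J) (c : R) :
  \sum_j c * (x2 == j)%:R * (f j * (j == b2)%:R) = c * f x2 * (x2 == b2)%:R.
Proof.
rewrite (bigD1 x2) //= big1 => [|j /negbTE hj]; first by rewrite eqxx addr0 mulr1 mulrA.
by rewrite eq_sym hj mulr0 mul0r.
Qed.

Lemma sum_j2 (x2 b2 : 'I_J) (c : R) :
  \sum_j c * (x2 == j)%:R * (j == b2)%:R = c * (x2 == b2)%:R.
Proof.
rewrite (bigD1 x2) //= big1 => [|j /negbTE hj]; first by rewrite eqxx addr0 mulr1.
by rewrite eq_sym hj mulr0 mul0r.
Qed.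

Lemma kron_EE r (C : 'M[R]_(r, Q)) : C *m (const_mx 1 : 'M_(Q,1)) = 0 -> kron C (1%:M : 'M_J) *m EE = 0.
Proof.
move=> hC; apply/matrixP => x j; rewrite !mxE.
under eq_bigr => a _ do rewrite !mxE.
rewrite (sum_kron (fun q j' => C (kdiv x) q * (kmod x == j')%:R * (j' == j)%:R)).
under eq_bigr => q _ do rewrite sum_j2.
rewrite -mulr_suml.
move/matrixP: hC => /(_ (kdiv x) 0); rewrite !mxE => h.
have h' : \sum_q C (kdiv x) q = 0 by rewrite -[RHS]h; apply: eq_bigr => q _; rewrite mxE mulr1.
by rewrite h' mul0r.
Qed.

Lemma kron_FZ r (C : 'M[R]_(r, Q)) : kron C (1%:M : 'M_J) *m FZ = kron (C *m ZQ R Fp) 1%:M.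
Proof.
apply/matrixP => x b; rewrite !mxE.
under eq_bigr => a _ do rewrite !mxE.
rewrite (sum_kron (fun q j' => C (kdiv x) q * (kmod x == j')%:R *
   (zp R q (enum_val (kdiv b)) * (j' == kmod b)%:R))).
under eq_bigr => q _ do rewrite sum_j.
rewrite mulr_suml; apply: eq_bigr => q _; by rewrite !mxE.
Qed.

Lemma sum_j3 (j j' : 'I_J) (c : R) :
  \sum_i c * (i == j)%:R * (i == j')%:R = c * (j == j')%:R.
Proof. under eq_bigr => i _ do rewrite (eq_sym i j). exact: sum_j2. Qed.

Lemma sum_j4 (f : 'I_J -> R) (j b2 : 'I_J) (c : R) :
  \sum_i c * (i == j)%:R * (f i * (i == b2)%:R) = c * f j * (j == b2)%:R.
Proof. under eq_bigr => i _ do rewrite (eq_sym i j). exact: sum_j. Qed.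

Lemma Ep_EE : Ep *m EE = 1%:M.
Proof.
apply/matrixP => j j'; rewrite !mxE.
under eq_bigr => a _ do rewrite !mxE.
rewrite (sum_kron (fun q j'' => (Q%:R)^-1 * (j'' == j)%:R * (j'' == j')%:R)).
under eq_bigr => q _ do rewrite sum_j3.
rewrite sumr_const card_ord -mulr_natr; field; exact: QR0.

Qed.

Lemma Ep_FZ : set0 \notin Fp -> Ep *m FZ = 0.
Proof.
move=> h0; apply/matrixP => j b; rewrite !mxE.
under eq_bigr => a _ do rewrite !mxE.
rewrite (sum_kron (fun q j'' => (Q%:R)^-1 * (j'' == j)%:R *
   (zp R q (enum_val (kdiv b)) * (j'' == kmod b)%:R))).
under eq_bigr => q _ do rewrite sum_j4.
rewrite -mulr_suml -mulr_sumr sumzp0 //; ring.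
Qed.

Definition Tm : 'M[R]_(N, Q) := \matrix_(i, q) (w i == q)%:R.
Definition X2 : 'M[R]_(N, Q * J) := \matrix_(i, a) ((w i == kdiv a)%:R * X i (kmod a)).

Lemma chiL_split : chiL w X = row_mx Tm X2.
Proof.
apply/matrixP => i c; rewrite [LHS]mxE.
by case: (split_ordP c) => c' ->; rewrite ?row_mxEl ?row_mxEr !mxE.
Qed.

Lemma Tm_mul d (M : 'M[R]_(Q, d)) : Tm *m M = \matrix_(i, c) M (w i) c.
Proof.
apply/matrixP => i c; rewrite !mxE.
under eq_bigr => q _ do rewrite mxE (eq_sym (w i) q).
exact: sum_eq1.
Qed.

Lemma sum_j5 (f : 'I_J -> R) (j : 'I_J) (c : R) :
  \sum_i c * f i * (i == j)%:R = c * f j.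
Proof.
rewrite (bigD1 j) //= big1 => [|i /negbTE hi]; first by rewrite eqxx addr0 mulr1.
by rewrite hi mulr0.
Qed.

Lemma X2_EE : X2 *m EE = X.
Proof.
apply/matrixP => i j; rewrite !mxE.
pose F := fun (q : 'I_Q) (j' : 'I_J) => (w i == q)%:R * X i j' * (j' == j)%:R.
transitivity (\sum_(a : 'I_(Q * J)) F (kdiv a) (kmod a)).
  by apply: eq_bigr => a _; rewrite /F !mxE.
rewrite (sum_kron F) /F.
under eq_bigr => q _ do rewrite sum_j5 (eq_sym (w i) q).
exact: sum_eq1.
Qed.

Lemma X2_FZ : X2 *m FZ = interact w X Fp.
Proof.
apply/matrixP => i b; rewrite !mxE.
pose F := fun (q : 'I_Q) (j' : 'I_J) => ((w i == q)%:R * zp R q (enum_val (kdiv b))) * X i j' * (j' == kmod b)%:R.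
transitivity (\sum_(a : 'I_(Q * J)) F (kdiv a) (kmod a)).
  by apply: eq_bigr => a _; rewrite /F !mxE /=; ring.
rewrite (sum_kron F) /F.
under eq_bigr => q _ do rewrite sum_j5 (eq_sym (w i) q) -mulrA.
rewrite (sum_eq1 (w i) (fun q => zp R q (enum_val (kdiv b)) * X i (kmod b))). by [].
Qed.

Variable Y : 'cV[R]_N.

Lemma model_ok d r (D : 'M[R]_(N, d)) (Rm : 'M[R]_(r, Q + Q * J)) (A : 'M[R]_(Q + Q * J, d))
  (S : 'M[R]_(Q + Q * J, r)) (L : 'M[R]_(d, Q + Q * J)) :
  (chiL w X)^T *m chiL w X \in unitmx -> Rm *m A = 0 -> Rm *m S = 1%:M -> L *m A = 1%:M ->
  (r + d = Q + Q * J)%N -> chiL w X *m A = D -> CS R Fp *m usubmx A = 2%:R *: selZ R Fp d ->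
  equivalence w X Y Fp D Rm.
Proof.
move=> HG HRA HRS HLA Hdim HD HC th [Hth Hmin].
have e1 := rls_sol HG HRA HRS HLA Hdim Hth Hmin.
have e2 := Pfull_eq HG HRA HRS HLA Hdim Hth Hmin.
rewrite -HD; split.
  by rewrite /tau_u e1 -mul_usub_mx mulmxA HC -scalemxAl.
have -> : Psi_r w X Y Rm th = ulsubmx (Pfull (chiL w X) Y Rm th) by [].
rewrite e2 /ulsubmx -!mul_usub_mx -mulmx_lsub -trmx_usub.
set U := usubmx A; set E := ehw Y (chiL w X *m A).
have -> : CS R Fp *m (U *m E *m U^T) *m (CS R Fp)^T = (CS R Fp *m U) *m E *m (CS R Fp *m U)^T.
  by rewrite trmx_mul !mulmxA.
rewrite HC /Omega_u linearZ /= -!scalemxAl -scalemxAr scalerA -natrM.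
by rewrite !mulmxA.
Qed.

End Conc2.

Section Models.
Variables (R : realFieldType) (K N J : nat) (w : 'I_N -> 'I_(2 ^ K)) (X : 'M[R]_(N, J))
  (Y : 'cV[R]_N) (Fp : {set {set 'I_K}}).
Hypothesis Hp0 : set0 \notin Fp.
Local Notation Q := (2 ^ K)%N.
Local Notation Fm := (Fminus Fp).

Lemma card_F : (1 + #|Fp| + #|Fm| = Q)%N.
Proof.
have -> : Fm = ~: (set0 |: Fp) by apply/setP => S; rewrite !inE negb_or.
have h1 := cardsC (set0 |: Fp).
rewrite cardsU1 Hp0 /= in h1.
have h2 : #|{set 'I_K}| = Q by rewrite -cardsT -powersetT card_powerset cardsT card_ord.
by rewrite h2 in h1.
Qed.

Lemma Fm0 : set0 \notin Fm.
Proof. by rewrite !inE eqxx. Qed.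

Lemma Fm_disj : [disjoint Fm & Fp].
Proof.
rewrite disjoint_subset; apply/subsetP => S; rewrite !inE => /andP [_ h]; exact: h.
Qed.

Definition AYN : 'M[R]_(Q, 1 + #|Fp|) := row_mx (const_mx 1) (ZQ R Fp).
Definition LY : 'M[R]_(1 + #|Fp|, Q) :=
  col_mx ((Q%:R)^-1 *: (const_mx 1 : 'M_(1, Q))) (2%:R^-1 *: CS R Fp).

Lemma LY_AYN : LY *m AYN = 1%:M.
Proof.
rewrite /LY /AYN mul_col_row -!scalemxAl one_one one_ZQ // CS_one // CS_ZQ_same !scaler0.
rewrite !scale_scalar_mx !mulVf ?QR0 // ?pnatr_eq0 //.
by rewrite -scalar_mx_block.
Qed.

Lemma CSp_AYN : CS R Fp *m AYN = row_mx 0 2%:R%:M.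
Proof. by rewrite mul_mx_row CS_one // CS_ZQ_same. Qed.

Lemma CSm_AYN : CS R Fm *m AYN = 0.
Proof. by rewrite mul_mx_row CS_one ?Fm0 // CS_ZQ_disj ?Fm_disj // row_mx0. Qed.

Lemma CSm_inv : CS R Fm *m ((Q%:R / 4%:R) *: (CS R Fm)^T) = 1%:M.
Proof.
rewrite -scalemxAr CS_CStr scalerA.
have -> : Q%:R / 4%:R * (4%:R / Q%:R) = 1 :> R.
  by field; exact: QR0.
exact: scale1r.
Qed.

Lemma selZ_base : selZ R Fp (1 + #|Fp|) = row_mx 0 1%:M.
Proof.
apply/matrixP => j c; rewrite !mxE.
case: (split_ordP c) => c' ->; rewrite ?row_mxEl ?row_mxEr !mxE /=.
  by rewrite (ord1 c') /=.
by rewrite add1n eqSS eq_sym.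
Qed.

Lemma selZ_ext d e : (#|Fp| < d)%N -> selZ R Fp (d + e) = row_mx (selZ R Fp d) 0.
Proof.
move=> hd; apply/matrixP => j c; rewrite !mxE.
case: (split_ordP c) => c' ->; rewrite ?row_mxEl ?row_mxEr !mxE //=.
have hj := ltn_ord j; have -> : ((d + c')%N == j.+1) = false by apply/negbTE; apply/eqP; lia.
by [].
Qed.

Definition A_N : 'M[R]_(Q + Q * J, 1 + #|Fp|) := col_mx AYN 0.
Definition L_N : 'M[R]_(1 + #|Fp|, Q + Q * J) := row_mx LY 0.
Definition S_N : 'M[R]_(Q + Q * J, #|Fm| + Q * J) :=
  block_mx ((Q%:R / 4%:R) *: (CS R Fm)^T) 0 0 1%:M.

Lemma N_LA : L_N *m A_N = 1%:M.
Proof. by rewrite /L_N /A_N mul_row_col LY_AYN mulmx0 addr0. Qed.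

Lemma N_RS : R_N R J Fp *m S_N = 1%:M.
Proof.
rewrite /R_N /S_N mulmx_block !mulmx0 !mul0mx !addr0 !add0r mul1mx CSm_inv.
by rewrite -scalar_mx_block.
Qed.

Lemma N_RA : R_N R J Fp *m A_N = 0.
Proof.
by rewrite /R_N /A_N mul_block_col CSm_AYN !mulmx0 !mul0mx !addr0 col_mx0.
Qed.

Lemma N_D : chiL w X *m A_N = design_N R w Fp.
Proof.
rewrite chiL_split /A_N mul_row_col mulmx0 addr0 /AYN mul_mx_row !Tm_mul.
by congr row_mx; apply/matrixP => i c; rewrite !mxE.
Qed.

Lemma N_C : CS R Fp *m usubmx A_N = 2%:R *: selZ R Fp (1 + #|Fp|).
Proof.
by rewrite /A_N col_mxKu CSp_AYN selZ_base scale_row_mx scaler0 scalemx1.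
Qed.

Lemma N_dim : (#|Fm| + Q * J + (1 + #|Fp|) = Q + Q * J)%N.
Proof. have := card_F; lia. Qed.

Definition A_F : 'M[R]_(Q + Q * J, 1 + #|Fp| + J) := row_mx A_N (col_mx 0 (EE R K J)).
Definition L_F : 'M[R]_(1 + #|Fp| + J, Q + Q * J) := col_mx L_N (row_mx 0 (Ep R K J)).
Definition S_F : 'M[R]_(Q + Q * J, #|Fm| + Q.-1 * J) :=
  block_mx ((Q%:R / 4%:R) *: (CS R Fm)^T) 0 0 (kron (diffS R K) (1%:M : 'M_J)).

Lemma F_LA : L_F *m A_F = 1%:M.
Proof.
rewrite /L_F /A_F mul_col_row N_LA /L_N /A_N !mul_row_col !mulmx0 !mul0mx !addr0 !add0r.
by rewrite Ep_EE -scalar_mx_block.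
Qed.

Lemma F_RS : R_F R J Fp *m S_F = 1%:M.
Proof.
rewrite /R_F /S_F mulmx_block !mulmx0 !mul0mx !addr0 !add0r CSm_inv kron_mul diff_S mul1mx kron11.
by rewrite -scalar_mx_block.
Qed.

Lemma F_RA : R_F R J Fp *m A_F = 0.
Proof.
rewrite /R_F /A_F /A_N mul_mx_row !mul_block_col CSm_AYN !mulmx0 !mul0mx !addr0 !add0r.
by rewrite kron_EE ?diff_one // !col_mx0 row_mx0.
Qed.

Lemma F_D : chiL w X *m A_F = design_F w X Fp.
Proof.
rewrite /A_F mul_mx_row N_D chiL_split mul_row_col mulmx0 add0r X2_EE.
by [].
Qed.

Lemma F_C : CS R Fp *m usubmx A_F = 2%:R *: selZ R Fp (1 + #|Fp| + J).
Proof.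
rewrite /A_F usubmx_row !col_mxKu mul_mx_row CSp_AYN mulmx0 selZ_ext // selZ_base.
by rewrite !scale_row_mx !scaler0 scalemx1.
Qed.

Lemma F_dim : (#|Fm| + Q.-1 * J + (1 + #|Fp| + J) = Q + Q * J)%N.
Proof. have := card_F; nia. Qed.

Definition A_L : 'M[R]_(Q + Q * J, 1 + #|Fp| + J + #|Fp| * J) :=
  row_mx A_F (col_mx 0 (FZ R J Fp)).
Definition FP' : 'M[R]_(#|Fp| * J, Q * J) := 2%:R^-1 *: kron (CS R Fp) (1%:M : 'M_J).
Definition L_L : 'M[R]_(1 + #|Fp| + J + #|Fp| * J, Q + Q * J) := col_mx L_F (row_mx 0 FP').
Definition S_L : 'M[R]_(Q + Q * J, #|Fm| + #|Fm| * J) :=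
  block_mx ((Q%:R / 4%:R) *: (CS R Fm)^T) 0 0 (kron ((Q%:R / 4%:R) *: (CS R Fm)^T) (1%:M : 'M_J)).

Lemma FP'_FZ : FP' *m FZ R J Fp = 1%:M.
Proof.
rewrite /FP' -scalemxAl kron_FZ CS_ZQ_same -scalemx1 kronZl kron11 scalerA mulVf ?scale1r //.
by rewrite pnatr_eq0.
Qed.

Lemma L_LA : L_L *m A_L = 1%:M.
Proof.
rewrite /L_L /A_L mul_col_row F_LA /L_F mul_col_mx /L_N /A_F mul_mx_row /A_N.
rewrite !mul_row_col !mulmx0 !mul0mx !addr0 !add0r Ep_FZ // FP'_FZ col_mx0.
rewrite /FP' -scalemxAl kron_EE ?CS_one // scaler0 row_mx0.
by rewrite -scalar_mx_block.
Qed.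

Lemma L_RS : R_L R J Fp *m S_L = 1%:M.
Proof.
rewrite /R_L /S_L mulmx_block !mulmx0 !mul0mx !addr0 !add0r CSm_inv kron_mul CSm_inv mul1mx kron11.
by rewrite -scalar_mx_block.
Qed.

Lemma L_RA : R_L R J Fp *m A_L = 0.
Proof.
rewrite /R_L /A_L /A_F /A_N !mul_mx_row !mul_block_col CSm_AYN !mulmx0 !mul0mx !addr0 !add0r.
rewrite kron_EE ?CS_one ?Fm0 // kron_FZ CS_ZQ_disj ?Fm_disj // kron0l.
by rewrite !col_mx0 !row_mx0.
Qed.

Lemma L_D : chiL w X *m A_L = design_L w X Fp.
Proof.
rewrite /A_L mul_mx_row F_D chiL_split mul_row_col mulmx0 add0r X2_FZ.
by [].
Qed.

Lemma L_C : CS R Fp *m usubmx A_L = 2%:R *: selZ R Fp (1 + #|Fp| + J + #|Fp| * J).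
Proof.
rewrite /A_L usubmx_row col_mxKu mul_mx_row F_C mulmx0 (@selZ_ext (1 + #|Fp| + J) (#|Fp| * J)); last by lia.
by rewrite scale_row_mx scaler0.
Qed.

Lemma L_dim : (#|Fm| + #|Fm| * J + (1 + #|Fp| + J + #|Fp| * J) = Q + Q * J)%N.
Proof. have := card_F; nia. Qed.

End Models.

End MC.
Import MC.

Local Open Scope ring_scope.

Theorem proposition2 (R : realFieldType) (K N J : nat)
  (w : 'I_N -> 'I_(2 ^ K)) (X : 'M[R]_(N, J)) (Y : 'cV[R]_N)
  (Fp : {set {set 'I_K}}) :
  set0 \notin Fp ->
  Fminus Fp != set0 ->
  (forall j : 'I_J, \sum_(i < N) X i j = 0) ->
  (chiL w X)^T *m chiL w X \in unitmx ->
  [/\ equivalence w X Y Fp (design_N R w Fp) (R_N R J Fp),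
      equivalence w X Y Fp (design_F w X Fp) (R_F R J Fp)
    & equivalence w X Y Fp (design_L w X Fp) (R_L R J Fp)].
Proof.
move=> Hp0 HFm Hx HG; split.
- eapply model_ok; [exact: HG | apply: N_RA | apply: N_RS | apply: N_LA | apply: N_dim | apply: N_D | apply: N_C]; exact: Hp0.
- eapply model_ok; [exact: HG | apply: F_RA | apply: F_RS | apply: F_LA | apply: F_dim | apply: F_D | apply: F_C]; exact: Hp0.
- eapply model_ok; [exact: HG | apply: L_RA | apply: L_RS | apply: L_LA | apply: L_dim | apply: L_D | apply: L_C]; exact: Hp0.
Qed.
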